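(* Let $\mathbb{G}=(\mathcal{V},\mathcal{E})$ be a connected undirected graph on $\mathcal{V}=\{1,\dots,m\}$ with $\bar m$ edges. For each edge $(i,j)$, in either order, let $A_{ij}\in\mathbb{R}^{d_{ij}\times n}$ have full row rank and $\boldsymbol{b}_{ij}\in\mathbb{R}^{d_{ij}}$, with $A_{ij}=A_{ji}$, $\boldsymbol{b}_{ij}=-\boldsymbol{b}_{ji}$. Let $\boldsymbol{f}_i:\mathbb{R}^n\to\mathbb{R}$ be continuously differentiable and convex, $\boldsymbol{f}(\boldsymbol{x})=\sum_i\boldsymbol{f}_i(\boldsymbol{x}_i)$, and assume the problem $\min\sum_i\boldsymbol{f}_i(\boldsymbol{x}_i)$ subject to $A_{ij}(\boldsymbol{x}_i-\boldsymbol{x}_j)=\boldsymbol{b}_{ij}$ for all $(i,j)\in\mathcal{E}$ has a solution, and that $\ker\bar H'\cap\operatorname{image}\bar P=\{\boldsymbol{0}\}$. Define the augmented Lagrangian $\boldsymbol{F}:\mathbb{R}^{mn}\times\mathbb{R}^{mn}\to\mathbb{R}$, $$\boldsymbol{F}(\boldsymbol{x},\boldsymbol{\lambda})=\boldsymbol{f}(\boldsymbol{x})+\boldsymbol{\lambda}'\bar H'\bar P(\bar H\boldsymbol{x}-\bar{\boldsymbol{b}})+\tfrac12\|\bar P(\bar H\boldsymbol{x}-\bar{\boldsymbol{b}})\|^2,$$ and the dynamics $$\dot{\boldsymbol{x}}=-\nabla\boldsymbol{f}(\boldsymbol{x})-\bar H'\bar P\bar H\boldsymbol{\lambda}-\bar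 H'\bar P(\bar H\boldsymbol{x}-\bar{\boldsymbol{b}}),\qquad \dot{\boldsymbol{\lambda}}=\bar H'\bar P(\bar H\boldsymbol{x}-\bar{\boldsymbol{b}}).$$ Then every equilibrium $(\bar{\boldsymbol{x}},\bar{\boldsymbol{\lambda}})$ of these dynamics is a global min-max saddle point of $\boldsymbol{F}$, i.e. $\boldsymbol{F}(\bar{\boldsymbol{x}},\boldsymbol{\lambda})\le\boldsymbol{F}(\bar{\boldsymbol{x}},\bar{\boldsymbol{\lambda}})\le\boldsymbol{F}(\boldsymbol{x},\bar{\boldsymbol{\lambda}})$ for all $\boldsymbol{x},\boldsymbol{\lambda}\in\mathbb{R}^{mn}$.
   Context: $\boldsymbol{x}=\mathrm{col}\{\boldsymbol{x}_1,\dots,\boldsymbol{x}_m\}$, $'$ denotes transpose, $\|\cdot\|$ the Euclidean norm. $P_{ij}=A_{ij}'(A_{ij}A_{ij}')^{-1}A_{ij}$, $\bar{\boldsymbol{b}}_{ij}=A_{ij}'(A_{ij}A_{ij}')^{-1}\boldsymbol{b}_{ij}$. With a fixed enumeration/orientation of edges $(i_1,j_1),\dots,(i_{\bar m},j_{\bar m})$: $\bar P=\mathrm{diag}\{P_{i_1j_1},\dots,P_{i_{\bar m}j_{\bar m}}\}$ (block diagonal), $\bar{\boldsymbol{b}}=\mathrm{col}\{\bar{\boldsymbol{b}}_{i_lj_l}\}_{l=1}^{\bar m}$, $H\in\mathbb{R}^{\bar m\times m}$ the oriented incidence matrix whose $l$-th row has $1$ in column $i_l$, $-1$ in column $j_l$,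 $0$ elsewhere, $\bar H=H\otimes I_n$. *)

(* Defs.v *)
From HB Require Import structures.
From mathcomp Require Import all_boot all_order all_algebra.
From mathcomp Require Import all_classical all_reals all_analysis.
Set Implicit Arguments. Unset Strict Implicit. Unset Printing Implicit Defensive.
Import Order.TTheory GRing.Theory Num.Theory.
Import numFieldNormedType.Exports.
Local Open Scope ring_scope.

(* A vector of R^{mn} is represented as its column decomposition
   x = col{x_1,...,x_m}, i.e. a function 'I_m -> 'cV_n. *)
Section Defs.
Variable R : realType.

Definition dotv n (u v : 'cV[R]_n) : R := \sum_(k < n) u k 0 * v k 0.

Definition dotb (K n : nat) (x y : 'I_K -> 'cV[R]_n) : R :=
  \sum_(i < K) dotv (x i) (y i).
Definition sqnormb (K n : nat) (x : 'I_K -> 'cV[R]_n) : R := dotb x x.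

Definition projA d n (A : 'M[R]_(d, n)) : 'M[R]_n :=
  A^T *m invmx (A *m A^T) *m A.
Definition bbarA d n (A : 'M[R]_(d, n)) (b : 'cV[R]_d) : 'cV[R]_n :=
  A^T *m invmx (A *m A^T) *m b.

(* Given the oriented edge enumeration ends : 'I_mb -> 'I_m * 'I_m:
   Hbar = H (x) I_n, its transpose, Pbar = diag{P_l}. *)
Variables (m n mb : nat) (ends : 'I_mb -> 'I_m * 'I_m).

Definition Hbar (x : 'I_m -> 'cV[R]_n) : 'I_mb -> 'cV[R]_n :=
  fun l => x (ends l).1 - x (ends l).2.

Definition HbarT (y : 'I_mb -> 'cV[R]_n) : 'I_m -> 'cV[R]_n :=
  fun i => \sum_(l < mb)
    ((if (ends l).1 == i then y l else 0) - (if (ends l).2 == i then y l else 0)).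

Definition Pbar (P : 'I_m -> 'I_m -> 'M[R]_n) (y : 'I_mb -> 'cV[R]_n)
  : 'I_mb -> 'cV[R]_n := fun l => P (ends l).1 (ends l).2 *m y l.

Definition bbar (bb : 'I_m -> 'I_m -> 'cV[R]_n) : 'I_mb -> 'cV[R]_n :=
  fun l => bb (ends l).1 (ends l).2.

End Defs.

Definition C1_with_grad (R : realType) n (f : 'cV[R]_n -> R)
  (g : 'cV[R]_n -> 'cV[R]_n) : Prop :=
  (forall x, differentiable f x /\ forall v, 'd f x v = dotv (g x) v)
  /\ continuous g.

Definition convex_fun (R : realType) n (f : 'cV[R]_n -> R) : Prop :=
  forall (x y : 'cV[R]_n) (t : R), 0 <= t <= 1 ->
    f (t *: x + (1 - t) *: y) <= t * f x + (1 - t) * f y.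

(* Main.v *)
Require Import Defs.
From HB Require Import structures.
From mathcomp Require Import all_boot all_order all_algebra.
From mathcomp Require Import all_classical all_reals all_analysis.
From mathcomp Require Import lra.
Set Implicit Arguments. Unset Strict Implicit.
Import Order.TTheory GRing.Theory Num.Theory.
Import numFieldNormedType.Exports.
Local Open Scope classical_set_scope.
Local Open Scope ring_scope.
Section Alg.
Variable R : realType.

Lemma dotvE n (u v : 'cV[R]_n) : dotv u v = (u^T *m v) 0 0.
Proof. by rewrite /dotv mxE; apply: eq_bigr => k _; rewrite mxE. Qed.

Lemma dotvC n (u v : 'cV[R]_n) : dotv u v = dotv v u.
Proof. by rewrite /dotv; apply: eq_bigr => k _; rewrite mulrC. Qed.

Lemma dotvBr n (u v w : 'cV[R]_n) : dotv u (v - w) = dotv u v - dotv u w.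
Proof. by rewrite !dotvE mulmxBr !mxE. Qed.

Lemma dotvDr n (u v w : 'cV[R]_n) : dotv u (v + w) = dotv u v + dotv u w.
Proof. by rewrite !dotvE mulmxDr !mxE. Qed.

Lemma dotvNl n (u v : 'cV[R]_n) : dotv (- u) v = - dotv u v.
Proof. by rewrite /dotv -sumrN; apply: eq_bigr => k _; rewrite mxE mulNr. Qed.

Lemma dotvBl n (u v w : 'cV[R]_n) : dotv (v - w) u = dotv v u - dotv w u.
Proof. by rewrite dotvC dotvBr !(dotvC u). Qed.

Lemma dotv0r n (u : 'cV[R]_n) : dotv u 0 = 0.
Proof. by rewrite /dotv big1 // => k _; rewrite mxE mulr0. Qed.

Lemma dotv_sumr n I (r : seq I) (u : 'cV[R]_n) (w : I -> 'cV[R]_n) :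
  dotv u (\sum_(l <- r) w l) = \sum_(l <- r) dotv u (w l).
Proof.
elim: r => [|a r IH]; first by rewrite !big_nil dotv0r.
by rewrite !big_cons dotvDr IH.
Qed.

Lemma dotv_if n (u y : 'cV[R]_n) (c : bool) :
  dotv u (if c then y else 0) = if c then dotv u y else 0.
Proof. by case: c; rewrite ?dotv0r. Qed.

Lemma dotv_sym n (P : 'M[R]_n) (u v : 'cV[R]_n) :
  P^T = P -> dotv u (P *m v) = dotv (P *m u) v.
Proof. by move=> HP; rewrite !dotvE trmx_mul HP mulmxA. Qed.

Lemma dotv_ge0 n (u : 'cV[R]_n) : 0 <= dotv u u.
Proof. by apply: sumr_ge0 => k _; rewrite -expr2 sqr_ge0. Qed.

Lemma projA_sym d n (A : 'M[R]_(d, n)) : (projA A)^T = projA A.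
Proof.
by rewrite /projA !trmx_mul trmxK trmx_inv trmx_mul trmxK mulmxA.
Qed.

Lemma dotb0r K n (x y : 'I_K -> 'cV[R]_n) : (forall i, y i = 0) -> dotb x y = 0.
Proof. by move=> H; rewrite /dotb big1 // => i _; rewrite H dotv0r. Qed.

Lemma dotbC K n (x y : 'I_K -> 'cV[R]_n) : dotb x y = dotb y x.
Proof. by apply: eq_bigr => i _; rewrite dotvC. Qed.

Lemma sqnormb_ge0 K n (x : 'I_K -> 'cV[R]_n) : 0 <= sqnormb x.
Proof. by apply: sumr_ge0 => i _; apply: dotv_ge0. Qed.

Lemma adjH m n mb (ends : 'I_mb -> 'I_m * 'I_m) (u : 'I_m -> 'cV[R]_n) y :
  dotb u (HbarT ends y) = dotb (Hbar ends u) y.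
Proof.
rewrite /dotb /HbarT.
under eq_bigr => i _ do rewrite dotv_sumr.
rewrite exchange_big /=; apply: eq_bigr => l _.
under eq_bigr => i _ do rewrite dotvBr !dotv_if.
rewrite sumrB /Hbar dotvBl; congr (_ - _).
  rewrite (bigD1 (ends l).1) //= eqxx big1 ?addr0 // => i /negbTE.
  by rewrite eq_sym => ->.
rewrite (bigD1 (ends l).2) //= eqxx big1 ?addr0 // => i /negbTE.
by rewrite eq_sym => ->.
Qed.

End Alg.
Lemma cvx_grad (R : realType) n (f : 'cV[R]_n -> R) g :
  C1_with_grad f g -> convex_fun f -> forall x y, f x + dotv (g x) (y - x) <= f y.
Proof.
move=> [hd _] hc x y.
have [dx dv] := hd x.
set v := y - x.
have hder : derivable f x v by exact: diff_derivable.
have hcv := cvg_dnbhs_at_right hder.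
have H : \forall h \near (0:R)^'+,
    h^-1 *: ((f \o shift x) (h *: v) - f x) <= f y - f x.
  near=> h.
  have h0 : 0 < h by near: h; exact: nbhs_right_gt.
  have h1 : h <= 1 by near: h; apply: nbhs_right_le; exact: ltr01.
  rewrite /= /v.
  have -> : h *: (y - x) + x = h *: y + (1 - h) *: x.
    by rewrite scalerBr scalerBl scale1r [x - _]addrC addrA.
  have := hc y x h; rewrite h1 (ltW h0) => /(_ isT) hle.
  have -> : h^-1 *: (f (h *: y + (1 - h) *: x) - f x) = (f (h *: y + (1 - h) *: x) - f x) / h by rewrite mulrC.
  rewrite ler_pdivrMr //. nra.
have := cvgr_to_le hcv H.
rewrite -/(derive f x v) deriveE // dv => /(_ (at_right_proper_filter _)); lra.
Unshelve. all: by end_near.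
Qed.
Theorem lemma2 (R : realType) (m n mb : nat)
  (e : rel 'I_m) (ends : 'I_mb -> 'I_m * 'I_m)
  (d : 'I_m -> 'I_m -> nat)
  (A : forall i j : 'I_m, 'M[R]_(d i j, n))
  (b : forall i j : 'I_m, 'cV[R]_(d i j))
  (f : 'I_m -> 'cV[R]_n -> R) (gf : 'I_m -> 'cV[R]_n -> 'cV[R]_n)
  (* undirected connected graph on 'I_m *)
  (e_sym : symmetric e) (e_irr : irreflexive e)
  (e_conn : forall i j, connect e i j)
  (* ends enumerates the edges, each exactly once with a fixed orientation *)
  (ends_edge : forall l, e (ends l).1 (ends l).2)
  (ends_onto : forall i j, e i j -> exists l, ends l = (i, j) \/ ends l = (j, i))
  (ends_inj : forall l l', ends l = ends l' \/ ends l = ((ends l').2, (ends l').1) -> l = l')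
  (* data on edges *)
  (A_full : forall i j, e i j -> row_free (A i j))
  (A_sym : forall i j, e i j -> exists h : d i j = d j i,
      castmx (h, erefl n) (A i j) = A j i /\ castmx (h, erefl 1%N) (b i j) = - b j i)
  (* objective *)
  (f_C1 : forall i, C1_with_grad (f i) (gf i))
  (f_cvx : forall i, convex_fun (f i))
  (sol_ex : exists x : 'I_m -> 'cV[R]_n,
      (forall i j, e i j -> A i j *m (x i - x j) = b i j) /\
      forall y : 'I_m -> 'cV[R]_n,
        (forall i j, e i j -> A i j *m (y i - y j) = b i j) ->
        \sum_(i < m) f i (x i) <= \sum_(i < m) f i (y i))
  :
  let P := fun i j => projA (A i j) in
  let bb := fun i j => bbarA (A i j) (b i j) in
  (* ker Hbar' /\ image Pbar = {0} *)
  (forall y : 'I_mb -> 'cV[R]_n,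
      (forall i, HbarT ends y i = 0) -> (exists z, y = Pbar ends P z) -> forall l, y l = 0) ->
  let res := fun x : 'I_m -> 'cV[R]_n => fun l => Hbar ends x l - bbar ends bb l in
  let F := fun x lam : 'I_m -> 'cV[R]_n =>
    \sum_(i < m) f i (x i)
    + dotb lam (HbarT ends (Pbar ends P (res x)))
    + 2^-1 * sqnormb (Pbar ends P (res x)) in
  forall xe lame : 'I_m -> 'cV[R]_n,
  (* equilibrium of the dynamics *)
  (forall i, - gf i (xe i) - HbarT ends (Pbar ends P (Hbar ends lame)) i
             - HbarT ends (Pbar ends P (res xe)) i = 0) ->
  (forall i, HbarT ends (Pbar ends P (res xe)) i = 0) ->
  forall x lam : 'I_m -> 'cV[R]_n,
    F xe lam <= F xe lame /\ F xe lame <= F x lame.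
Proof.
move=> P bb Hker res F xe lame Heq1 Heq2 x lam.
set Q := Pbar ends P.
have hQ0 : forall l, Q (res xe) l = 0.
  by apply: Hker => //; exists (res xe).
have HP : forall i j, (P i j)^T = P i j by move=> i j; apply: projA_sym.
have E0 : forall la, dotb la (HbarT ends (Q (res xe))) = 0.
  by move=> la; apply: dotb0r.
have S0 : sqnormb (Q (res xe)) = 0 by apply: dotb0r.
split; first by rewrite /F !E0.
rewrite /F E0 S0.
have Sq := sqnormb_ge0 (Q (res x)).
set a := HbarT ends (Q (Hbar ends lame)).
have Hg : forall i, gf i (xe i) = - a i.
  move=> i; have := Heq1 i; rewrite Heq2 subr0 => /eqP; rewrite subr_eq0 => /eqP E.
  by rewrite /a -E opprK.
have Hf : \sum_(i < m) f i (xe i) - dotb a (fun i => x i - xe i)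
          <= \sum_(i < m) f i (x i).
  rewrite /dotb -sumrB; apply: ler_sum => i _.
  have := cvx_grad (f_C1 i) (f_cvx i) (xe i) (x i).
  by rewrite Hg dotvNl.
have Key : dotb a (fun i => x i - xe i) = dotb lame (HbarT ends (Q (res x))).
  rewrite dotbC /a !adjH /dotb; apply: eq_bigr => l _.
  rewrite /Q /Pbar dotv_sym // [in RHS]dotv_sym //.
  have -> : res x l = res xe l + Hbar ends (fun i => x i - xe i) l.
    apply/matrixP => k j; rewrite /res /Hbar !mxE; lra.
  rewrite dotvDr -(dotv_sym (Hbar ends lame l) (res xe l) (HP _ _)).
  have := hQ0 l; rewrite /Q /Pbar => ->; rewrite dotv0r add0r.
  by rewrite -dotv_sym // dotvC.
rewrite Key /Q in Hf; rewrite /Q in Sq.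
have h2 : 0 <= 2^-1 * sqnormb (Pbar ends P (res x)) by rewrite mulr_ge0 // invr_ge0.
rewrite mulr0; lra.
Qed.
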